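(* Let $r\ge3$, let $H=C_r$ be the cycle $1-2-\cdots-r-1$ and, for each $i\in\{1,\dots,r\}$, let $G_i$ be a $d_i$-regular graph of order $n_i$ with adjacency eigenvalues $d_i=\lambda_1(A(G_i)),\dots,\lambda_{n_i}(A(G_i))$. Let $G=\bigvee_{C_r}\{G_i:1\le i\le r\}$, $N_i=\sum_{j\in N_{C_r}(i)}n_j$, $\sigma(M_i(s))=\{s^2(d_i+N_i-1)-s\lambda_k(A(G_i))+1\}_{k=1}^{n_i}$ and $\lambda_1(M_i(s))=s^2(d_i+N_i-1)-sd_i+1$. Then $$\sigma(M_G(s))=\bigcup_{i=1}^r\big(\sigma(M_i(s))-\{\lambda_1(M_i(s))\}\big)\cup\sigma(F_r(s)),$$ where $F_r(s)$ is the $r\times r$ symmetric periodic Jacobi matrix with diagonal entries $\lambda_1(M_1(s)),\dots,\lambda_1(M_r(s))$, entries $(F_r(s))_{i,i+1}=(F_r(s))_{i+1,i}=-s\sqrt{n_in_{i+1}}$ for $i=1,\dots,r-1$, $(F_r(s))_{1,r}=(F_r(s))_{r,1}=-s\sqrt{n_1n_r}$, and all other entries $0$ (removing $\{\lambda_1(M_i(s))\}$ means removing one copy, corresponding to $k=1$).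
   Context: For a simple undirected graph $G$ with adjacency matrix $A$, degree matrix $D$ and identity $I$, and real $s$, the deformed Laplacian matrix is $M_G(s)=I-sA+s^2(D-I)$; $\sigma(\cdot)$ is the multiset of eigenvalues. $H$-join: given a graph $H$ on vertex set $\{1,\dots,r\}$ and pairwise vertex-disjoint graphs $G_1,\dots,G_r$, $\bigvee_H\{G_i\}$ has vertex set $\bigcup_iV(G_i)$ and edges $\bigcup_iE(G_i)$ together with all edges $uv$, $u\in V(G_i)$, $v\in V(G_j)$, for each $ij\in E(H)$. *)

(* Defs.v *)
From HB Require Import structures.
From mathcomp Require Import all_boot all_order all_algebra.
Set Implicit Arguments. Unset Strict Implicit. Unset Printing Implicit Defensive.
Import Order.TTheory GRing.Theory Num.Theory.
Local Open Scope ring_scope.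

(* A simple graph on a finite vertex type T is a symmetric irreflexive rel T.
   Matrices indexed by the vertices are indexed by 'I_#|T| via enum_val. *)
Section GraphMatrices.
Variable R : nzRingType.
Variables (T : finType) (e : rel T).

Definition adjmx : 'M[R]_#|T| :=
  \matrix_(i, j) (e (enum_val i) (enum_val j))%:R.

Definition degmx : 'M[R]_#|T| :=
  diag_mx (\row_i #|[set y | e (enum_val i) y]|%:R).

Definition deformed_lap (s : R) : 'M[R]_#|T| :=
  1%:M - s *: adjmx + s ^+ 2 *: (degmx - 1%:M).
End GraphMatrices.

(* multiplicity of x in the multiset sigma(M) of eigenvalues of M
   (algebraic multiplicity = root multiplicity in the characteristic polynomial) *)
Definition eigmult (R : fieldType) (m : nat) (M : 'M[R]_m) (x : R) : nat :=
  mup x (char_poly M).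

Definition hjoin (r : nat) (n : 'I_r -> nat) (h : rel 'I_r)
  (e : forall i, rel 'I_(n i)) : rel {i : 'I_r & 'I_(n i)} :=
  fun x y => if tag x == tag y then e (tag x) (tagged x) (tagged_as x y)
             else h (tag x) (tag y).

(* the cycle C_r : 1 - 2 - ... - r - 1 (0-indexed here) *)
Definition cycle_rel (r : nat) : rel 'I_r :=
  fun i j => ((val j == (val i).+1 %% r) || (val i == (val j).+1 %% r))%N.

Definition Nsum (r : nat) (n : 'I_r -> nat) (i : 'I_r) : nat :=
  (\sum_(j < r | cycle_rel i j) n j)%N.

Definition Mi (R : nzRingType) (m : nat) (e : rel 'I_m) (d N : nat) (s : R)
  : 'M[R]_#|'I_m| :=
  (s ^+ 2 * (d%:R + N%:R - 1) + 1)%:M - s *: adjmx R e.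

Definition lam1 (R : nzRingType) (d N : nat) (s : R) : R :=
  s ^+ 2 * (d%:R + N%:R - 1) - s * d%:R + 1.

Definition Fr (R : rcfType) (r : nat) (n d : 'I_r -> nat) (s : R) : 'M[R]_r :=
  \matrix_(i, j)
    if i == j then lam1 (d i) (Nsum n i) s
    else if cycle_rel i j then - s * Num.sqrt ((n i)%:R * (n j)%:R)
    else 0.

(* Main.v *)
Require Import Defs.
From HB Require Import structures.
From mathcomp Require Import all_boot all_order all_algebra.
From mathcomp Require Import fingroup perm.
From mathcomp Require Import zify ring lra.
Import Order.TTheory GRing.Theory Num.Theory.
Local Open Scope ring_scope.


Lemma det_cast_ord (F : comNzRingType) m k (eq : m = k) (M : 'M[F]_k) :
  \det (\matrix_(i, j) M (cast_ord eq i) (cast_ord eq j)) = \det M.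
Proof.
subst k; congr (\det _); apply/matrixP => i j; by rewrite mxE !cast_ord_id.
Qed.

Lemma det_castmx_sq (F : comNzRingType) m k (eq : m = k) (M : 'M[F]_m) :
  \det (castmx (eq, eq) M) = \det M.
Proof. by subst k; rewrite castmx_id. Qed.

Lemma det_size0 (F : comNzRingType) k (M : 'M[F]_k) : k = 0%N -> \det M = 1.
Proof. by move=> e; subst k; rewrite det_mx00. Qed.

Lemma det_mxdiag (F : comNzRingType) m (p_ : 'I_m -> nat)
  (B : forall i, 'M[F]_(p_ i)) :
  \det (\mxdiag_(i < m) B i) = \prod_(i < m) \det (B i).
Proof.
elim: m p_ B => [|m IH] p_ B.
  by rewrite big_ord0 det_size0 // big_ord0.
rewrite mxdiag_recl det_castmx_sq det_ublock big_ord_recl.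
by rewrite (IH (fun i => p_ (lift ord0 i)) (fun i => B (lift ord0 i))).
Qed.

Lemma det_sylvester (F : comNzRingType) m k (X : 'M[F]_(m, k)) (Y : 'M[F]_(k, m)) :
  \det (1%:M + X *m Y) = \det (1%:M + Y *m X).
Proof.
pose W := block_mx 1%:M (- X) Y 1%:M.
have h1 : W *m block_mx 1%:M X 0 1%:M = block_mx 1%:M 0 Y (1%:M + Y *m X).
  rewrite mulmx_block !mulmx1 !mul1mx ?mulmx0 ?mul0mx ?addr0 ?add0r.
  by rewrite subrr addrC.
have h2 : block_mx 1%:M X 0 1%:M *m W = block_mx (1%:M + X *m Y) 0 Y 1%:M.
  rewrite mulmx_block !mulmx1 !mul1mx ?mulmx0 ?mul0mx ?addr0 ?add0r.
  by rewrite addNr.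
have := congr1 determinant h1; rewrite det_mulmx det_ublock det_lblock !det1 !mul1r mulr1 => <-.
have := congr1 determinant h2; rewrite det_mulmx det_ublock det_lblock !det1 !mul1r mulr1 => <-.
by [].
Qed.

Lemma horner_char_poly (F : comNzRingType) m (A : 'M[F]_m) x :
  (char_poly A).[x] = \det (x%:M - A).
Proof.
rewrite /char_poly /determinant horner_sum; apply: eq_bigr => s _.
rewrite hornerM horner_exp !hornerE; congr (_ * _).
rewrite (big_morph _ (fun p q => hornerM p q x) (hornerC 1 x)).
by apply: eq_bigr => i _; rewrite !mxE !(hornerE, hornerMn).
Qed.

Lemma poly_eq_cofinite (F : numDomainType) (p q : {poly F}) (S : seq F) :
  (forall x, x \notin S -> p.[x] = q.[x]) -> p = q.
Proof.
move=> H; apply/eqP; rewrite -subr_eq0; apply/eqP.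
pose g := (p - q) * \prod_(y <- S) ('X - y%:P).
have g0 : g = 0.
  apply/eqP/negPn/negP => gn0.
  suff : (size g < size g)%N by rewrite ltnn.
  have := @max_poly_roots _ g [seq k%:R | k <- iota 0 (size g)] gn0.
  rewrite size_map size_iota; apply.
    apply/allP => y _; apply/rootP; rewrite /g hornerM horner_prod.
    have [yS|yS] := boolP (y \in S).
      by rewrite (big_rem y) //= hornerXsubC subrr mul0r mulr0.
    by rewrite hornerD hornerN H // subrr mul0r.
  rewrite map_inj_uniq ?iota_uniq // => a b /eqP; rewrite eqr_nat => /eqP //.
move: g0 => /eqP; rewrite mulf_eq0 => /orP [/eqP //|].
have : \prod_(y <- S) ('X - y%:P) != 0 :> {poly F}.
  by apply: monic_neq0; apply: monic_prod_XsubC.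
by move=> /negPf ->.
Qed.

Lemma det_reindex (F : comNzRingType) m k (eq : m = k) (f : 'I_m -> 'I_k)
  (finj : injective f) (M : 'M[F]_k) :
  \det (\matrix_(i, j) M (f i) (f j)) = \det M.
Proof.
subst k; pose sg : 'S_m := perm finj.
have -> : \matrix_(i, j) M (f i) (f j) = row_perm sg (col_perm sg M).
  by apply/matrixP => i j; rewrite !mxE !permE.
rewrite row_permE col_permE !det_mulmx !det_perm odd_permV.
by rewrite mulrC -mulrA -expr2 sqrr_sign mulr1.
Qed.

Lemma mup_prod (F : fieldType) (I : finType) (f : I -> {poly F}) x :
  (forall i, f i != 0) -> mup x (\prod_i f i) = (\sum_i mup x (f i))%N.
Proof.
move=> fn0.
suff : \prod_i f i != 0 /\ mup x (\prod_i f i) = (\sum_i mup x (f i))%N by case.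
apply: (big_rec2 (fun p m => p != 0 /\ mup x p = m)).
  by rewrite oner_neq0; split => //; rewrite mupNroot // root1.
move=> i p m _ [pn0 <-]; split; first by rewrite mulf_neq0.
by rewrite mupM.
Qed.



Section Main.
Variables (R : rcfType) (r : nat) (n d : 'I_r -> nat).
Variables (e : forall i : 'I_r, rel 'I_(n i)) (s : R).
Hypothesis r3 : (3 <= r)%N.
Hypothesis npos : forall i, (0 < n i)%N.
Hypothesis esymm : forall i, symmetric (e i).
Hypothesis eirr : forall i, irreflexive (e i).
Hypothesis ereg : forall i (v : 'I_(n i)), #|[set w | e i v w]| = d i.

Local Notation V := {i : 'I_r & 'I_(n i)}.
Local Notation N := #|{: V}|.
Let EG : rel V := hjoin (@cycle_rel r) e.
Let ML : 'M[R]_N := deformed_lap EG s.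
Let deg (u : V) : nat := (d (tag u) + Nsum n (tag u))%N.
Let ev : 'I_N -> V := enum_val.

Lemma cyc_irr (i : 'I_r) : cycle_rel i i = false.
Proof.
rewrite /cycle_rel orbb; apply/negbTE; have := ltn_ord i.
case: (ltnP (val i).+1 r) => h _.
  rewrite modn_small //; lia.
have -> : (val i).+1 = r by apply/eqP; rewrite eqn_leq h ltn_ord.
rewrite modnn; lia.
Qed.

Lemma big_V (T : Type) (idx : T) (op : Monoid.com_law idx) (G : V -> T) :
  \big[op/idx]_(v : V) G v = \big[op/idx]_(j < r) \big[op/idx]_(w : 'I_(n j)) G (Tagged _ w).
Proof. by rewrite sig_big_dep; apply: eq_big => // -[j w]. Qed.

Lemma sum_V (G : V -> R) :
  \sum_(v : V) G v = \sum_(j < r) \sum_(w : 'I_(n j)) G (Tagged _ w).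
Proof. exact: big_V. Qed.

Lemma sumR_bool (T : finType) (P : pred T) :
  \sum_(w : T) (P w)%:R = #|[set w | P w]|%:R :> R.
Proof.
rewrite -sum1dep_card natr_sum [RHS]big_mkcond; apply: eq_bigr => w _.
by case: (P w).
Qed.

Lemma EG_deg (u : V) : #|[set y | EG u y]| = deg u.
Proof.
case: u => i v; rewrite /deg /=.
rewrite -sum1dep_card big_mkcond /= big_V (bigD1 i) //=.
congr (_ + _)%N.
  rewrite -(ereg i v) -sum1dep_card [RHS]big_mkcond /=; apply: eq_bigr => w _.
  by rewrite /EG /hjoin /= eqxx tagged_asE.
rewrite /Nsum [RHS]big_mkcond /= [RHS](bigD1 i) //= cyc_irr add0n.
apply: eq_bigr => j ji; rewrite /EG /hjoin /= eq_sym (negbTE ji).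
case: (cycle_rel i j); last by rewrite big1.
by rewrite sum1_card card_ord.
Qed.

Lemma ML_E a b : ML a b =
  (a == b)%:R * (1 + s ^+ 2 * ((deg (ev a))%:R - 1)) - s * (EG (ev a) (ev b))%:R.
Proof.
rewrite /ML /deformed_lap /adjmx /degmx !mxE EG_deg.
case: (eqVneq a b) => [<-|ab]; rewrite /= ?mulr1n ?mulr0n; last first.
  by rewrite /ev; ring.
by rewrite /ev; ring.
Qed.


Lemma evK (w : V) : ev (enum_rank w) = w.
Proof. exact: enum_rankK. Qed.

Lemma eq_rank a (w : V) : (a == enum_rank w) = (ev a == w).
Proof. by rewrite -(inj_eq enum_val_inj) enum_rankK. Qed.

Lemma sum_N (F : 'I_N -> R) : \sum_(b : 'I_N) F b = \sum_(w : V) F (enum_rank w).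
Proof. rewrite (reindex enum_rank) //=. apply: onW_bij. exact: enum_rank_bij. Qed.

Lemma sum_delta (T : finType) (k : T) (f : T -> R) : \sum_j (k == j)%:R * f j = f k.
Proof.
rewrite (bigD1 k) //= eqxx mul1r big1 ?addr0 // => j jk.
by rewrite eq_sym (negbTE jk) mul0r.
Qed.

Let t (a : 'I_N) : 'I_r := tag (ev a).
Let D0 : 'M[R]_N := \matrix_(a, b) if t a == t b then ML a b else 0.
Let U : 'M[R]_(N, r) := \matrix_(a, i) (t a == i)%:R.
Let C : 'M[R]_r := \matrix_(i, j) (cycle_rel i j)%:R.
Let lam (i : 'I_r) : R := lam1 (d i) (Nsum n i) s.
Let Q : 'M[R]_r := \matrix_(i, j)
  if i == j then lam i else - s * (cycle_rel i j)%:R * (n j)%:R.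

Lemma UCUt a b : (U *m C *m U^T) a b = (cycle_rel (t a) (t b))%:R.
Proof.
rewrite !mxE.
under eq_bigr do rewrite !mxE.
under eq_bigr do under eq_bigr do rewrite !mxE.
under eq_bigr do rewrite sum_delta mulrC.
by rewrite sum_delta.
Qed.

Lemma ML_split x : x%:M - ML = (x%:M - D0) + s *: (U *m C *m U^T).
Proof.
apply/matrixP => a b; move: (UCUt a b); rewrite !mxE => ->.
case: (eqVneq (t a) (t b)) => [<-|tab]; first by rewrite cyc_irr mulr0 addr0.
have ab : (a == b) = false.
  by apply/negbTE; apply: contra_neq tab => ->.
rewrite ab /EG /hjoin -/(t a) -/(t b) (negbTE tab) /=.
rewrite mulr0n /t; ring.
Qed.

Lemma D0U_aux (u : V) (i : 'I_r) :
  \sum_(w : V) (if tag u == tag w then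
      (u == w)%:R * (1 + s ^+ 2 * ((deg u)%:R - 1)) - s * (EG u w)%:R else 0)
    * (tag w == i)%:R = (tag u == i)%:R * lam (tag u).
Proof.
case: u => j v /=; rewrite big_V (bigD1 j) //= [X in _ + X]big1 ?addr0; last first.
  move=> k kj; apply: big1 => w _; by rewrite eq_sym (negbTE kj) mul0r.
rewrite eqxx -big_distrl /= mulrC; congr (_ * _).
under eq_bigr do rewrite eq_Tagged /= /EG /hjoin /= eqxx tagged_asE.
rewrite sumrB sum_delta -big_distrr /= sumR_bool ereg /lam /lam1 /deg /= natrD.
ring.
Qed.

Lemma D0U a i : (D0 *m U) a i = (t a == i)%:R * lam (t a).
Proof.
rewrite mxE sum_N -(D0U_aux (ev a) i); apply: eq_bigr => w _.
rewrite [D0 _ _]mxE [U _ _]mxE ML_E /t eq_rank !evK.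
by [].
Qed.

Lemma AU x : (x%:M - D0) *m U = U *m diag_mx (\row_i (x - lam i)).
Proof.
apply/matrixP => a i; rewrite mulmxBl mul_scalar_mx mul_mx_diag.
rewrite [LHS]mxE [X in _ + X]mxE D0U [X in X - _]mxE !mxE.
case: (eqVneq (t a) i) => [->|]; first by rewrite /=; ring.
by move=> _; rewrite /=; ring.
Qed.

Lemma UtU : U^T *m U = diag_mx (\row_i (n i)%:R).
Proof.
apply/matrixP => i j; rewrite !mxE sum_N sum_V.
under eq_bigr do under eq_bigr do rewrite !mxE /t evK /=.
under eq_bigr do rewrite sumr_const card_ord.
rewrite (eq_bigr (fun k => (i == k)%:R * ((k == j)%:R * (n k)%:R))); last first.
  by move=> k _; rewrite -[_ *+ n k]mulr_natr eq_sym; ring.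
rewrite (@sum_delta _ i (fun k => (k == j)%:R * (n k)%:R)).
by rewrite mulr_natl.
Qed.

Lemma detQ x : \det (x%:M - Q) = \det (x%:M - Fr n d s).
Proof.
pose S : 'M[R]_r := diag_mx (\row_i Num.sqrt (n i)%:R).
have key : S *m (x%:M - Q) = (x%:M - Fr n d s) *m S.
  apply/matrixP => i j; rewrite mul_diag_mx mul_mx_diag !mxE.
  case: (eqVneq i j) => [<-|ij]; first by rewrite /lam /=; ring.
  rewrite /= mulr0n !sub0r.
  case: (cycle_rel i j); last by rewrite mulr0 mul0r oppr0 mulr0 mul0r.
  rewrite sqrtrM ?ler0n //.
  have := sqr_sqrtr (ler0n R (n j)); rewrite expr2 => hsq.
  transitivity (Num.sqrt (n i)%:R * (s * (Num.sqrt (n j)%:R * Num.sqrt (n j)%:R))).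
    by rewrite hsq mulr1n; ring.
  ring.
have := congr1 determinant key; rewrite !det_mulmx.
have dS : \det S != 0.
  rewrite det_diag; apply/prodf_neq0 => i _; rewrite mxE sqrtr_eq0 -ltNge.
  by rewrite ltr0n npos.
by rewrite mulrC => /(mulIf dS).
Qed.

Let cc (u : V) : R := 1 + s ^+ 2 * ((deg u)%:R - 1).

Lemma AE x a b : (x%:M - D0) a b =
  if t a == t b then (ev a == ev b)%:R * (x - cc (ev a)) + s * (EG (ev a) (ev b))%:R
  else 0.
Proof.
rewrite mxE [X in _ + X]mxE [D0 a b]mxE ML_E [x%:M a b]mxE.
rewrite -(inj_eq enum_val_inj) -/(ev a) -/(ev b).
case: (eqVneq (t a) (t b)) => [tab|tab]; last first.
  have -> : (ev a == ev b) = false.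
    by apply/negbTE; apply: contra_neq tab; rewrite /t => ->.
  by rewrite subr0.
rewrite /cc; case: (ev a == ev b); rewrite /=; ring.
Qed.

Lemma MiE i p q : Mi (e i) (d i) (Nsum n i) s p q =
  (s ^+ 2 * ((d i)%:R + (Nsum n i)%:R - 1) + 1) *+ (p == q)
  - s * (e i (enum_val p) (enum_val q))%:R.
Proof. by rewrite /Mi /adjmx !mxE. Qed.

Let phi (k : 'I_(\sum_(i < r) n i)) : 'I_N := enum_rank (tagnat.sig k).

Lemma phi_inj : injective phi.
Proof. by move=> k l /enum_rank_inj /tagnat.sig_inj. Qed.

Lemma evRank i (k : 'I_(n i)) : ev (phi (@tagnat.Rank _ n i k)) = Tagged _ k.
Proof. by rewrite /phi evK /tagnat.Rank tagnat.rankK. Qed.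

Lemma detA x : \det (x%:M - D0) = \prod_i \det (x%:M - Mi (e i) (d i) (Nsum n i) s).
Proof.
have cardeq : (\sum_(i < r) n i)%N = N := esym (tagnat.card (p_ := n)).
rewrite -(@det_reindex _ _ _ cardeq _ phi_inj).
pose B i : 'M[R]_(n i) := \matrix_(k, l)
   (x%:M - Mi (e i) (d i) (Nsum n i) s) (enum_rank k) (enum_rank l).
have -> : \matrix_(k, l) (x%:M - D0) (phi k) (phi l) = \mxdiag_(i < r) B i.
  rewrite -[LHS]submxblockK /mxdiag; apply/eq_mxblockP => i j.
  apply/matrixP => k l; rewrite /submxblock /mxsub mxE mxE AE /t !evRank /=.
  case: (eqVneq i j) => [ij|ij]; last by rewrite mxE.
  subst j; rewrite conform_mx_id /B mxE.
  rewrite [RHS]mxE [X in _ = _ + X]mxE MiE [x%:M _ _]mxE !enum_rankK (inj_eq enum_rank_inj) eq_Tagged /=.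
  rewrite /EG /hjoin /= eqxx tagged_asE /cc /deg /= natrD.
  case: (k == l); rewrite /=; ring.
rewrite det_mxdiag; apply: eq_bigr => i _.
exact: (@det_reindex _ _ _ (esym (card_ord (n i))) _ (@enum_rank_inj _)).
Qed.

Lemma pointwise x : (forall i, x != lam i) ->
  \det (x%:M - ML) * \prod_i (x - lam i) =
  \prod_i \det (x%:M - Mi (e i) (d i) (Nsum n i) s) * \det (x%:M - Fr n d s).
Proof.
move=> xl.
pose Dl : 'M[R]_r := diag_mx (\row_i (x - lam i)).
pose Di : 'M[R]_r := diag_mx (\row_i (x - lam i)^-1).
have dDl : \det Dl = \prod_i (x - lam i).
  by rewrite det_diag; apply: eq_bigr => i _; rewrite mxE.
have dDi : \det Di = \prod_i (x - lam i)^-1.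
  by rewrite det_diag; apply: eq_bigr => i _; rewrite mxE.
have DlDi : Dl *m Di = 1%:M.
  rewrite mulmx_diag; apply/matrixP => i j; rewrite !mxE divff //.
  by rewrite subr_eq0.
pose X := U *m Di; pose Y := s *: (C *m U^T).
have h1 : x%:M - ML = (x%:M - D0) *m (1%:M + X *m Y).
  have AX : (x%:M - D0) *m X = U.
    rewrite /X (@mulmxA _ N N r r (x%:M - D0) U Di) AU.
    by rewrite -(@mulmxA _ N r r r U Dl Di) DlDi mulmx1.
  rewrite (ML_split x) mulmxDr mulmx1 (@mulmxA _ N N r N (x%:M - D0) X Y) AX.
  by rewrite /Y scalemxAr scalemxAr (@mulmxA _ N r r N U C (s *: U^T)).
have h2 : 1%:M + Y *m X = (x%:M - Q) *m Di.
  have -> : x%:M - Q = Dl + s *: (C *m diag_mx (\row_i (n i)%:R)).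
    apply/matrixP => i j; rewrite mul_mx_diag !mxE.
    case: (eqVneq i j) => [<-|ij]; first by rewrite cyc_irr /=; ring.
    by rewrite /= mulr0n; ring.
  rewrite mulmxDl DlDi /Y /X -!scalemxAl !mulmxA -(mulmxA C) UtU.
  by [].
rewrite h1 det_mulmx det_sylvester h2 det_mulmx detQ detA dDi -mulrA.
congr (_ * _); rewrite -mulrA -big_split /= big1 ?mulr1 // => i _.
by rewrite mulVf // subr_eq0.
Qed.

Lemma polyid : char_poly ML * \prod_i ('X - (lam i)%:P) =
  \prod_i char_poly (Mi (e i) (d i) (Nsum n i) s) * char_poly (Fr n d s).
Proof.
apply: (poly_eq_cofinite _ _ _ [seq lam i | i <- enum 'I_r]) => x xS.
rewrite !hornerM !horner_prod !horner_char_poly.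
under eq_bigr do rewrite hornerXsubC.
under [in RHS]eq_bigr do rewrite horner_char_poly.
apply: pointwise => i; apply/eqP => exi; move/negP: xS; apply.
by rewrite exi; apply: map_f; rewrite mem_enum.
Qed.

Lemma root_Mi i : root (char_poly (Mi (e i) (d i) (Nsum n i) s)) (lam i).
Proof.
rewrite -eigenvalue_root_char; apply/eigenvalueP.
exists (const_mx 1); last first.
  apply/eqP => /matrixP /(_ 0 (enum_rank (Ordinal (npos i)))).
  by rewrite !mxE; apply/eqP; rewrite oner_neq0.
apply/matrixP => z j; rewrite !mxE.
under eq_bigr do rewrite mxE mul1r MiE.
rewrite sumrB (bigD1 j) //= eqxx mulr1n big1 ?addr0; last first.
  by move=> k kj; rewrite (negbTE kj) mulr0n.
rewrite -big_distrr /= (reindex enum_rank) /=; last first.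
  by apply: onW_bij; exact: enum_rank_bij.
under eq_bigr do rewrite enum_rankK esymm.
rewrite sumR_bool ereg /lam /lam1; ring.
Qed.

Lemma main_thm x : eigmult ML x =
  (\sum_(i < r) (eigmult (Mi (e i) (d i) (Nsum n i) s) x - (x == lam1 (d i) (Nsum n i) s))
     + eigmult (Fr n d s) x)%N.
Proof.
rewrite /eigmult.
have cn0 m (A : 'M[R]_m) : char_poly A != 0 := monic_neq0 (char_poly_monic A).
have := congr1 (mup x) polyid.
have pn0 : \prod_i ('X - (lam i)%:P) != 0 :> {poly R}.
  by apply: monic_neq0; apply: monic_prod_XsubC.
have qn0 : \prod_i char_poly (Mi (e i) (d i) (Nsum n i) s) != 0.
  by apply/prodf_neq0 => i _.
rewrite mupM // mupM // !mup_prod // => [|i]; last by rewrite polyXsubC_eq0.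
under eq_bigr do rewrite -[('X - _)]expr1 mup_XsubCX.
set a := fun i : 'I_r => mup x (char_poly (Mi (e i) (d i) (Nsum n i) s)).
set b := fun i : 'I_r => (x == lam1 (d i) (Nsum n i) s) : nat.
have hle i : (b i <= a i)%N.
  rewrite /b /a; case: eqP => [->|_] //=.
  by rewrite -XsubC_dvd ?cn0 // dvdp_XsubCl; exact: root_Mi.
have hs : (\sum_i a i = \sum_i (a i - b i) + \sum_i b i)%N.
  by rewrite -big_split; apply: eq_bigr => i _ /=; rewrite subnK.
have hb : (\sum_i (if lam i == x then 1 else 0) = \sum_i b i)%N.
  by apply: eq_bigr => i _; rewrite /b eq_sym; case: eqP.
rewrite hb hs => H.
transitivity (\sum_i (a i - b i) + mup x (char_poly (Fr n d s)))%N; last by [].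
by move/eqP: H; rewrite addnAC eqn_add2r => /eqP.
Qed.

End Main.

Theorem corollary6p6 (R : rcfType) (r : nat) (n d : 'I_r -> nat)
  (e : forall i : 'I_r, rel 'I_(n i)) (s : R) :
  (3 <= r)%N ->
  (forall i, (0 < n i)%N) ->
  (forall i, symmetric (e i)) ->
  (forall i, irreflexive (e i)) ->
  (forall i (v : 'I_(n i)), #|[set w | e i v w]| = d i) ->
  forall x : R,
    eigmult (deformed_lap (hjoin (@cycle_rel r) e) s) x =
    (\sum_(i < r)
        (eigmult (Mi (e i) (d i) (Nsum n i) s) x - (x == lam1 (d i) (Nsum n i) s))
     + eigmult (Fr n d s) x)%N.
Proof.
move=> r3 npos esymm eirr ereg x.
by apply: main_thm.
Qed.
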